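(* For any vector $\vec\lambda=(\lambda_1,\dots,\lambda_n)\in\mathbb{R}^n$ and any $\vec a=(a_1,\dots,a_n)\in\mathbb{R}^n$ with $|\vec a|=1$, $$\Big|\sum_{i=1}^n\lambda_i^2a_i^2-\Big(\sum_{i=1}^n\lambda_i\Big)\Big(\sum_{j=1}^n\lambda_ja_j^2\Big)-\frac12\Big[\sum_{i=1}^n\lambda_i^2-\Big(\sum_{i=1}^n\lambda_i\Big)^2\Big]\Big|\le\frac{n-2}{2}\Big[\sum_{i=1}^n\lambda_i^2-\sum_{i=1}^n\lambda_i^2a_i^2\Big].$$ *)

(* Defs.v *)
From mathcomp Require Import all_boot all_order all_algebra.
From mathcomp Require Import reals.

(* Main.v *)
Require Import Defs.
From mathcomp Require Import all_boot all_order all_algebra.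
From mathcomp Require Import reals.
From mathcomp Require Import ring lra.
Import Order.TTheory GRing.Theory Num.Theory.
Local Open Scope ring_scope.
Section S.
Variable R : realType.
Lemma cs (I : finType) (A : pred I) (x : I -> R) :
  (\sum_(i in A) x i) ^+ 2 <= #|A|%:R * \sum_(i in A) x i ^+ 2.
Proof.
set T := \sum_(i in A) x i; set P := \sum_(i in A) x i ^+ 2.
have H : 0 <= \sum_(i in A) \sum_(j in A) (x i - x j) ^+ 2.
  by apply: sumr_ge0 => i _; apply: sumr_ge0 => j _; exact: sqr_ge0.
have E1 : forall i, \sum_(j in A) (x i - x j) ^+ 2 =
   #|A|%:R * x i ^+ 2 - 2 * x i * T + P.
  move=> i.
  have -> : \sum_(j in A) (x i - x j) ^+ 2 =
     \sum_(j in A) (x i ^+ 2 + (- (2 * x i) * x j + x j ^+ 2)).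
    by apply: eq_bigr => j _; ring.
  rewrite big_split big_split /= sumr_const -mulr_sumr /T /P mulr_natl; ring.
have E2 : \sum_(i in A) \sum_(j in A) (x i - x j) ^+ 2 =
   #|A|%:R * P *+ 2 - 2 * T ^+ 2.
  under eq_bigr => i _ do rewrite E1.
  rewrite big_split big_split /= sumr_const -mulr_sumr /T /P.
  rewrite sumrN -mulr_suml -mulr_sumr -/T -/P mulr_natl. ring.
rewrite E2 in H. lra.
Qed.
Lemma absl (I : finType) (A : pred I) (x : I -> R) :
  `|(\sum_(i in A) x i) ^+ 2 - \sum_(i in A) x i ^+ 2|
    <= (#|A|%:R - 1) * \sum_(i in A) x i ^+ 2.
Proof.
have P0 : 0 <= \sum_(i in A) x i ^+ 2 by apply: sumr_ge0 => i _; exact: sqr_ge0.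
case Hc: #|A| => [|[|m]].
- have H0 := card0_eq Hc.
  rewrite !big_pred0 // ?expr0n /= ?subr0 ?normr0 ?mulr0 //.
- have [y Hy] := mem_card1 Hc.
  rewrite !(big_pred1 y) // subrr normr0 subrr mul0r //.
- have := @cs I A x; rewrite Hc => Hcs.
  have H2 : (2:R) <= m.+2%:R by rewrite ler_nat.
  rewrite ler_norml; apply/andP; split.
  + have : 0 <= (\sum_(i in A) x i) ^+ 2 by exact: sqr_ge0.
    nra.
  + lra.
Qed.
Lemma splitk n (k : 'I_n) (F : 'I_n -> R) :
  \sum_(i < n) F i = F k + \sum_(i in predC1 k) F i.
Proof. by rewrite (bigD1 k) //=; congr (_ + _); apply: eq_bigl. Qed.

End S.

Theorem lemma2p2 (R : realType) (n : nat) (lam a : 'I_n -> R)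
  (ha : \sum_(i < n) a i ^+ 2 = 1) :
  `| \sum_(i < n) lam i ^+ 2 * a i ^+ 2
     - (\sum_(i < n) lam i) * (\sum_(j < n) lam j * a j ^+ 2)
     - 2^-1 * (\sum_(i < n) lam i ^+ 2 - (\sum_(i < n) lam i) ^+ 2) |
  <= (n%:R - 2) / 2 * (\sum_(i < n) lam i ^+ 2 - \sum_(i < n) lam i ^+ 2 * a i ^+ 2).
Proof.
set S := \sum_(i < n) lam i; set Q := \sum_(i < n) lam i ^+ 2.
pose T k := \sum_(i in predC1 k) lam i.
pose P k := \sum_(i in predC1 k) lam i ^+ 2.
have HS k : S = lam k + T k by rewrite /S (@splitk R _ k).
have HQ k : Q = lam k ^+ 2 + P k by rewrite /Q (@splitk R _ k).
have EL : \sum_(i < n) lam i ^+ 2 * a i ^+ 2 - S * (\sum_(j < n) lam j * a j ^+ 2)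
     - 2^-1 * (Q - S ^+ 2) =
     \sum_(k < n) a k ^+ 2 * (2^-1 * (T k ^+ 2 - P k)).
  have -> : \sum_(k < n) a k ^+ 2 * (2^-1 * (T k ^+ 2 - P k)) =
      \sum_(k < n) (lam k ^+ 2 * a k ^+ 2 - S * (lam k * a k ^+ 2)
        - (2^-1 * (Q - S ^+ 2)) * a k ^+ 2).
    apply: eq_bigr => k _.
    rewrite (HS k) (HQ k); move: (T k) (P k) => t p; by field.
  by rewrite !GRing.sumrB -!mulr_sumr ha mulr1.
have ER : (n%:R - 2) / 2 * (Q - \sum_(i < n) lam i ^+ 2 * a i ^+ 2) =
     \sum_(k < n) a k ^+ 2 * ((n%:R - 2) / 2 * P k).
  have -> : \sum_(k < n) a k ^+ 2 * ((n%:R - 2) / 2 * P k) =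
      \sum_(k < n) ((n%:R - 2) / 2 * (Q * a k ^+ 2 - lam k ^+ 2 * a k ^+ 2)).
    apply: eq_bigr => k _.
    have := HQ k. move=> ->. ring.
  by rewrite -mulr_sumr GRing.sumrB -!mulr_sumr ha mulr1.
rewrite EL ER.
apply: le_trans (ler_norm_sum _ _ _) _.
apply: ler_sum => k _.
rewrite normrM ger0_norm ?sqr_ge0 //.
apply: ler_wpM2l; first exact: sqr_ge0.
have H := @absl R _ (predC1 k) lam.
rewrite cardC1 card_ord in H.
move: H; rewrite -/(T k) -/(P k).
case: n lam a ha S Q T P HS HQ EL ER k => [|n'] lam a ha S Q T P HS HQ EL ER k; first by case: k.
move=> H.
have E : n'.+1%:R = n'%:R + 1 :> R by rewrite -addn1 natrD.
rewrite normrM ger0_norm ?invr_ge0 ?ler0n // E.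
have -> : (n'%:R + 1 - 2 : R) / 2 * P k = 2^-1 * ((n'%:R - 1) * P k) by field.
by apply: ler_wpM2l => //; rewrite invr_ge0 ler0n.
Qed.
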